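(* Let $I\subseteq\mathbb{R}$ be an interval. If $(p_\lambda)_{\lambda\in I}$ and $(q_\lambda)_{\lambda\in I}$ are increasing nets of projections in an abelian $AW^*$-algebra, then $$\bigwedge_{\lambda\in I}(p_\lambda\vee q_\lambda)=\Big(\bigwedge_{\lambda\in I}p_\lambda\Big)\vee\Big(\bigwedge_{\mu\in I}q_\mu\Big).$$
   Context: An $AW^*$-algebra is a C*-algebra $\mathcal{M}$ such that for every nonempty $S\subseteq\mathcal{M}$ there is a projection $p$ with $\{x\in\mathcal{M}: sx=0\ \forall s\in S\}=p\mathcal{M}$; its projections form a complete lattice under the Löwner order, with lattice operations $\vee,\wedge$. A net $(p_\lambda)_{\lambda\in I}$ is increasing if $p_\lambda\le p_\mu$ whenever $\lambda\le\mu$. *)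

(* Defs.v *)
From HB Require Import structures.
From mathcomp Require Import all_boot all_order all_algebra.
From mathcomp Require Import complex.
From mathcomp Require Import all_classical all_reals topology normedtype.
Set Implicit Arguments. Unset Strict Implicit. Unset Printing Implicit Defensive.
Import Order.TTheory GRing.Theory Num.Theory.
Import numFieldNormedType.Exports.
Local Open Scope ring_scope.
Local Open Scope complex_scope.
Local Open Scope classical_set_scope.

(* No unit is assumed. *)
Definition is_Cstar_algebra (R : realType) (A : completeNormedModType R[i])
    (mul : A -> A -> A) (star : A -> A) : Prop :=
  (forall x y z, mul x (mul y z) = mul (mul x y) z)
   /\ (forall x y z, mul (x + y) z = mul x z + mul y z)
   /\ (forall x y z, mul x (y + z) = mul x y + mul x z)
   /\ (forall (a : R[i]) x y, mul (a *: x) y = a *: mul x y)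
   /\ (forall (a : R[i]) x y, mul x (a *: y) = a *: mul x y)
   /\ (forall x y, star (x + y) = star x + star y)
   /\ (forall (a : R[i]) x, star (a *: x) = (a^*)%C *: star x)
   /\ (forall x, star (star x) = x)
   /\ (forall x y, star (mul x y) = mul (star y) (star x))
   /\ (forall x y, `|mul x y| <= `|x| * `|y|)
   /\ (forall x, `|mul (star x) x| = `|x| ^+ 2).

Definition is_abelian (A : Type) (mul : A -> A -> A) : Prop :=
  forall x y, mul x y = mul y x.

Definition is_projection (A : Type) (mul : A -> A -> A) (star : A -> A) (p : A)
  : Prop := mul p p = p /\ star p = p.

Definition is_positive (A : Type) (mul : A -> A -> A) (star : A -> A) (x : A)
  : Prop := exists z, x = mul (star z) z.

Definition lowner_le (R : realType) (A : completeNormedModType R[i])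
    (mul : A -> A -> A) (star : A -> A) (x y : A) : Prop :=
  is_positive mul star (y - x).

Definition is_AWstar_algebra (R : realType) (A : completeNormedModType R[i])
    (mul : A -> A -> A) (star : A -> A) : Prop :=
  is_Cstar_algebra mul star /\
  forall S : set A, S !=set0 ->
    exists p, is_projection mul star p /\
      [set x | forall s, S s -> mul s x = 0] = [set mul p y | y in [set: A]].

Definition is_proj_meet (R : realType) (A : completeNormedModType R[i])
    (mul : A -> A -> A) (star : A -> A) (T : Type) (D : set T) (f : T -> A)
    (m : A) : Prop :=
  [/\ is_projection mul star m,
      (forall i, D i -> lowner_le mul star m (f i)) &
      (forall r, is_projection mul star r ->
         (forall i, D i -> lowner_le mul star r (f i)) -> lowner_le mul star r m)].

Definition is_proj_join (R : realType) (A : completeNormedModType R[i])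
    (mul : A -> A -> A) (star : A -> A) (p q j : A) : Prop :=
  [/\ is_projection mul star j,
      lowner_le mul star p j, lowner_le mul star q j &
      (forall r, is_projection mul star r ->
         lowner_le mul star p r -> lowner_le mul star q r -> lowner_le mul star j r)].

Definition increasing_proj_net (R : realType) (A : completeNormedModType R[i])
    (mul : A -> A -> A) (star : A -> A) (I : interval R) (p : R -> A) : Prop :=
  (forall l, l \in I -> is_projection mul star (p l)) /\
  (forall l m, l \in I -> m \in I -> l <= m -> lowner_le mul star (p l) (p m)).

(* Main.v *)
Require Import Defs.
From HB Require Import structures.
From mathcomp Require Import all_boot all_order all_algebra.
From mathcomp Require Import complex.
From mathcomp Require Import all_classical all_reals topology normedtype.
From mathcomp Require Import lra.
From Stdlib Require Import Ring_theory Ring.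
Import Order.TTheory GRing.Theory Num.Theory.
Local Open Scope ring_scope.
Local Open Scope complex_scope.
Local Open Scope classical_set_scope.
Section Norms.
Variables (R : realType) (A : completeNormedModType R[i]).
Definition nm (x : A) : R := complex.Re `|x|.
Lemma normE (x : A) : `|x| = (nm x)%:C.
Proof.
have := normr_ge0 x; rewrite lecE => /andP[/eqP Him _].
by rewrite [LHS]complexE Him /= mulr0 addr0.
Qed.
Lemma lecR (u v : R) : (u%:C <= v%:C) = (u <= v).
Proof. by rewrite lecE /= eqxx. Qed.
Lemma nm_ge0 x : 0 <= nm x.
Proof. by rewrite -lecR rmorph0 -normE normr_ge0. Qed.
Lemma nm_add x y : nm (x + y) <= nm x + nm y.
Proof. have := ler_normD x y. rewrite !normE -rmorphD lecR. done. Qed.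
Lemma nm_opp x : nm (- x) = nm x.
Proof. by rewrite /nm normrN. Qed.
Lemma nm_eq0 x : nm x = 0 -> x = 0.
Proof. by move=> h; apply/eqP; rewrite -normr_eq0 normE h. Qed.
Lemma nm0 : nm 0 = 0.
Proof. by rewrite /nm normr0. Qed.
Lemma nm_scale (c : R) x : 0 <= c -> nm (c%:C *: x) = c * nm x.
Proof.
move=> c0; rewrite /nm normrZ ger0_norm ?lecR //.
by rewrite normE -rmorphM.
Qed.

Lemma real_key (C N d b : R) : 0 <= C -> 0 <= N -> 0 <= d -> 0 <= b ->
  (forall s, 0 <= s -> exists Y, [/\ 0 <= Y, (s + b) * N <= d + Y &
     Y ^+ 2 <= C * N ^+ 2 + s ^+ 2 * N ^+ 2]) -> b * N <= d.
Proof.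
move=> C0 N0 d0 b0 H; rewrite leNgt; apply/negP => hlt.
pose e := b * N - d. have e0 : 0 < e by rewrite subr_gt0.
pose s := C * N / (2 * e).
have s0 : 0 <= s by rewrite divr_ge0 ?mulr_ge0 // ltW.
have hs : s * (2 * e) = C * N by rewrite /s mulfVK // gt_eqF // mulr_gt0.
have [Y [Y0 h1 h2]] := H s s0.
have h3 : s * N + e <= Y by rewrite /e; lra.
have h4 : 0 <= s * N + e by have := mulr_ge0 s0 N0; lra.
have h5 : (s * N + e) ^+ 2 <= Y ^+ 2 by rewrite ler_pXn2r // nnegrE.
have : e ^+ 2 <= 0.
  have hs' : s * (2 * e) * N = C * N * N by rewrite hs.
  nra.
by rewrite leNgt exprn_gt0.
Qed.

Section Alg.
Variables (mul : A -> A -> A) (star : A -> A).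
Hypothesis HC : is_Cstar_algebra mul star.
Hypothesis HAb : is_abelian mul.
Local Notation "x ⋆ y" := (mul x y) (at level 40, left associativity).

Lemma mulA x y z : x ⋆ (y ⋆ z) = x ⋆ y ⋆ z.
Proof. by case: HC. Qed.
Lemma mulDl x y z : (x + y) ⋆ z = x ⋆ z + y ⋆ z.
Proof. by case: HC => _ []. Qed.
Lemma mulDr x y z : x ⋆ (y + z) = x ⋆ y + x ⋆ z.
Proof. by case: HC => _ [] _ []. Qed.
Lemma mulZl (a : R[i]) x y : (a *: x) ⋆ y = a *: (x ⋆ y).
Proof. by case: HC => _ [] _ [] _ []. Qed.
Lemma mulZr (a : R[i]) x y : x ⋆ (a *: y) = a *: (x ⋆ y).
Proof. by case: HC => _ [] _ [] _ [] _ []. Qed.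
Lemma starD x y : star (x + y) = star x + star y.
Proof. by case: HC => _ [] _ [] _ [] _ [] _ []. Qed.
Lemma starZ (a : R[i]) x : star (a *: x) = (a^*)%C *: star x.
Proof. by case: HC => _ [] _ [] _ [] _ [] _ [] _ []. Qed.
Lemma starK x : star (star x) = x.
Proof. by case: HC => _ [] _ [] _ [] _ [] _ [] _ [] _ []. Qed.
Lemma starM x y : star (x ⋆ y) = star y ⋆ star x.
Proof. by case: HC => _ [] _ [] _ [] _ [] _ [] _ [] _ [] _ []. Qed.
Lemma nm_mul x y : nm (x ⋆ y) <= nm x * nm y.
Proof.
case: HC => _ [] _ [] _ [] _ [] _ [] _ [] _ [] _ [] _ [] h _.
by have := h x y; rewrite !normE -rmorphM lecR.
Qed.
Lemma nm_cs x : nm (star x ⋆ x) = nm x ^+ 2.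
Proof.
case: HC => _ [] _ [] _ [] _ [] _ [] _ [] _ [] _ [] _ [] _ h.
have := h x; rewrite !normE -rmorphXn => /(congr1 (@complex.Re R)) //.
Qed.
Lemma mulC x y : x ⋆ y = y ⋆ x.
Proof. exact: HAb. Qed.

Lemma mul0l y : 0 ⋆ y = 0.
Proof. have h := mulDl 0 0 y; rewrite addr0 in h. by apply: (addrI (0 ⋆ y)); rewrite -h addr0. Qed.
Lemma mul0r y : y ⋆ 0 = 0.
Proof. by rewrite mulC mul0l. Qed.
Lemma mulNl x y : (- x) ⋆ y = - (x ⋆ y).
Proof. by apply/eqP; rewrite -addr_eq0 -mulDl addNr mul0l. Qed.
Lemma mulNr x y : x ⋆ (- y) = - (x ⋆ y).
Proof. by rewrite mulC mulNl mulC. Qed.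
Lemma mulBl x y z : (x - y) ⋆ z = x ⋆ z - y ⋆ z.
Proof. by rewrite mulDl mulNl. Qed.
Lemma mulBr x y z : x ⋆ (y - z) = x ⋆ y - x ⋆ z.
Proof. by rewrite mulDr mulNr. Qed.
Lemma mulCA x y z : x ⋆ (y ⋆ z) = y ⋆ (x ⋆ z).
Proof. by rewrite !mulA (mulC x). Qed.
Lemma mulAC x y z : x ⋆ y ⋆ z = x ⋆ z ⋆ y.
Proof. by rewrite -!mulA (mulC y). Qed.
Lemma star0 : star 0 = 0.
Proof. have h := starD 0 0; rewrite addr0 in h. by apply: (addrI (star 0)); rewrite -h addr0. Qed.
Lemma starN x : star (- x) = - star x.
Proof. by apply/eqP; rewrite -addr_eq0 -starD addNr star0. Qed.
Lemma starB x y : star (x - y) = star x - star y.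
Proof. by rewrite starD starN. Qed.
Lemma nm_star x : nm (star x) = nm x.
Proof.
have key y : nm y <= nm (star y).
  have := nm_mul (star y) y; rewrite nm_cs expr2.
  have [->|yp] := eqVneq (nm y) 0; first by rewrite nm_ge0.
  have yp' : 0 < nm y by rewrite lt0r yp nm_ge0.
  by rewrite ler_pM2r.
by apply/eqP; rewrite eq_le key -{2}(starK x) key.
Qed.

Definition Au := (A * R[i])%type.
Definition addU (u v : Au) : Au := (u.1 + v.1, u.2 + v.2).
Definition oppU (u : Au) : Au := (- u.1, - u.2).
Definition subU (u v : Au) : Au := addU u (oppU v).
Definition mulU (u v : Au) : Au :=
  (u.1 ⋆ v.1 + u.2 *: v.1 + v.2 *: u.1, u.2 * v.2).
Definition zeroU : Au := (0, 0).
Definition oneU : Au := (0, 1).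

Lemma Au_ring : ring_theory zeroU oneU addU mulU subU oppU (@eq Au).
Proof.
split.
- by case=> a x; rewrite /addU /zeroU /= !add0r.
- by case=> a x [b y]; rewrite /addU /= addrC (addrC x).
- by case=> a x [b y] [c z]; rewrite /addU /= !addrA.
- by case=> a x; rewrite /mulU /oneU /= mul0l add0r scale1r scaler0 addr0 mul1r.
- by case=> a x [b y]; rewrite /mulU /= mulC (mulrC x) addrAC.
- case=> a x [b y] [c z]; rewrite /mulU /=.
  rewrite !(mulDl, mulDr, mulZl, mulZr, scalerDr, scalerA) !mulA.
  rewrite (mulrC z x) (mulrC z y) mulrA; congr pair.
  by rewrite !addrA [LHS](ACl (1*4*2*5*3*6*7))%AC.
- case=> a x [b y] [c z]; rewrite /mulU /addU /=.
  rewrite !(mulDl, scalerDl, scalerDr) mulrDl; congr pair.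
  by rewrite !addrA [LHS](ACl (1*3*5*2*4*6))%AC.
- by [].
- by case=> a x; rewrite /addU /oppU /zeroU /= !subrr.
Qed.
Add Ring AuR : Au_ring.

Definition emb (a : A) : Au := (a, 0).
Definition sc (c : R[i]) : Au := (0, c).
Lemma emb_inj a b : emb a = emb b -> a = b.
Proof. by case. Qed.
Lemma embD a b : emb (a + b) = addU (emb a) (emb b).
Proof. by rewrite /emb /addU /= addr0. Qed.
Lemma embN a : emb (- a) = oppU (emb a).
Proof. by rewrite /emb /oppU /= oppr0. Qed.
Lemma embM a b : emb (a ⋆ b) = mulU (emb a) (emb b).
Proof. by rewrite /emb /mulU /= !scale0r !addr0 mulr0. Qed.
Lemma embZ c a : emb (c *: a) = mulU (sc c) (emb a).
Proof. by rewrite /emb /mulU /sc /= mul0l add0r scaler0 addr0 mulr0. Qed.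
Lemma emb0 : emb 0 = zeroU.
Proof. by []. Qed.
Lemma scM c d : sc (c * d) = mulU (sc c) (sc d).
Proof. by rewrite /sc /mulU /= mul0l !scaler0 !addr0. Qed.
Lemma scD c d : sc (c + d) = addU (sc c) (sc d).
Proof. by rewrite /sc /addU /= addr0. Qed.
Lemma scN c : sc (- c) = oppU (sc c).
Proof. by rewrite /sc /oppU /= oppr0. Qed.
Lemma sc1 : sc 1 = oneU.
Proof. by []. Qed.

Lemma sc2 : sc 2%:C = addU oneU oneU.
Proof.
rewrite /sc /addU /oneU /= addr0; congr pair.
by rewrite (rmorphD _ 1 1) rmorph1.
Qed.

Ltac lift := apply: emb_inj; rewrite ?(embD, embN, embM, embZ, emb0, scM, scD, scN, sc1, sc2).

Lemma conjR (s : R) : (s%:C)^*%C = s%:C.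
Proof. exact: conjc_real. Qed.

Lemma anti_sq a y (s : R) : star a = - a ->
  star (a ⋆ y - s%:C *: y) ⋆ (a ⋆ y - s%:C *: y) =
  - (star y ⋆ (a ⋆ a ⋆ y)) + (s%:C * s%:C) *: (star y ⋆ y).
Proof.
move=> ha.
rewrite starB starM starZ conjR ha.
lift. ring.
Qed.

Lemma fact_anti a y (b : R) : star a = - a -> 0 <= b ->
  b * nm y <= nm (a ⋆ y + b%:C *: y).
Proof.
move=> ha b0.
apply: (@real_key (nm (a ⋆ a))) => //; try exact: nm_ge0.
move=> s s0; exists (nm (a ⋆ y - s%:C *: y)); split; first exact: nm_ge0.
- have e : (s + b)%:C *: y = (a ⋆ y + b%:C *: y) - (a ⋆ y - s%:C *: y).
    have -> : (s + b)%:C = s%:C + b%:C by rewrite rmorphD.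
    by lift; ring.
  rewrite -nm_scale ?addr_ge0 // e.
  by apply: le_trans (nm_add _ _) _; rewrite nm_opp.
- rewrite -[nm (a ⋆ y - _) ^+ 2]nm_cs anti_sq //.
  apply: le_trans (nm_add _ _) _; rewrite nm_opp.
  have -> : s%:C * s%:C = (s ^+ 2)%:C by rewrite rmorphXn expr2.
  rewrite nm_scale ?sqr_ge0 // nm_cs.
  rewrite lerD2r.
  apply: le_trans (nm_mul _ _) _; rewrite nm_star.
  have h := nm_mul (a ⋆ a) y.
  have := ler_wpM2l (nm_ge0 y) h.
  by move/le_trans; apply; rewrite expr2 mulrCA mulrA.
Qed.

Lemma conj_i : ('i%C)^*%C = - 'i%C :> R[i].
Proof. by apply/eqP; rewrite eq_complex /= oppr0 !eqxx. Qed.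

Lemma fact4 c y : star c = - c ->
  4 * nm y <= nm (c ⋆ c ⋆ y - (2%:C * 2%:C) *: y).
Proof.
move=> hc.
pose z := c ⋆ y + 2%:C *: y.
have h1 := @fact_anti c y 2 hc (ler0n _ 2).
have hc' : star (- c) = - - c by rewrite starN hc.
have h2 := @fact_anti (- c) z 2 hc' (ler0n _ 2).
have e : (- c) ⋆ z + 2%:C *: z = - (c ⋆ c ⋆ y - (2%:C * 2%:C) *: y).
  by rewrite /z; lift; ring.
rewrite e nm_opp in h2.
lra.
Qed.

Lemma core x w : x ⋆ x = x -> star x = x -> star w ⋆ w = - x -> x = 0.
Proof.
move=> hxx hxs hw.
pose sw := star w.
have hwx : w ⋆ x = w.
  suff : w - w ⋆ x = 0 by move/eqP; rewrite subr_eq0 => /eqP <-.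
  apply: nm_eq0.
  have : nm (w - w ⋆ x) ^+ 2 = 0.
    rewrite -nm_cs starB starM hxs -/sw.
    have -> : (sw - x ⋆ sw) ⋆ (w - w ⋆ x) =
      sw ⋆ w - (sw ⋆ w) ⋆ x - x ⋆ (sw ⋆ w) + x ⋆ (sw ⋆ w) ⋆ x by lift; ring.
    rewrite -/sw in hw; rewrite hw.
    have -> : - x - (- x) ⋆ x - x ⋆ (- x) + x ⋆ (- x) ⋆ x =
       - x + x ⋆ x + x ⋆ x - x ⋆ x ⋆ x by lift; ring.
    by rewrite !hxx addrK addNr nm0.
  by move/eqP; rewrite sqrf_eq0 => /eqP.
have hswx : sw ⋆ x = sw.
  by rewrite /sw -hxs -starM mulC hwx.
rewrite -/sw in hw.
pose a := w - sw.
pose h := w + sw.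
pose b := 'i%C *: h.
have ha : star a = - a by rewrite /a starB /sw starK opprB.
have hh : star h = h by rewrite /h starD /sw starK addrC.
have hb : star b = - b by rewrite /b starZ conj_i hh scaleNr.
have hbb : b ⋆ b = - (h ⋆ h).
  by rewrite /b mulZl mulZr scalerA -expr2 sqr_i scaleN1r.
have I1 : h ⋆ h = a ⋆ a - (2%:C * 2%:C) *: x.
  have -> : h ⋆ h = a ⋆ a + (2%:C * 2%:C) *: (sw ⋆ w) by rewrite /h /a; lift; ring.
  by rewrite hw scalerN.
have I2 : a ⋆ a = - (b ⋆ b - (2%:C * 2%:C) *: x).
  by rewrite hbb I1 opprB opprK addrC subrK.
have L1 y : x ⋆ y = y -> 4 * nm y <= nm (h ⋆ h ⋆ y).
  move=> hy; rewrite I1 mulBl mulZl; rewrite [X in _ *: X]hy. exact: fact4.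
have L2 y : x ⋆ y = y -> 4 * nm y <= nm (a ⋆ a ⋆ y).
  move=> hy; rewrite I2 mulNl (mulBl (b ⋆ b)) (mulZl _ x y) hy nm_opp; exact: fact4.
have hax : a ⋆ x = a by rewrite /a mulBl hwx hswx.
have haa : x ⋆ (a ⋆ a) = a ⋆ a by rewrite mulC -mulA hax.
have B1 := L2 x hxx.
rewrite -mulA hax in B1.
have B2 := L1 _ haa.
have e1 : h ⋆ h ⋆ (a ⋆ a) = (h ⋆ a) ⋆ (h ⋆ a) by lift; ring.
have e2 : h ⋆ a = w ⋆ w - sw ⋆ sw by rewrite /h /a; lift; ring.
have nw : nm w ^+ 2 = nm x by rewrite -nm_cs hw nm_opp.
have nsw : nm sw = nm w by rewrite nm_star.
have U1 : nm (h ⋆ a) <= 2 * nm x.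
  rewrite e2; apply: le_trans (nm_add _ _) _; rewrite nm_opp.
  have := nm_mul w w; have := nm_mul sw sw; rewrite nsw -expr2 nw; lra.
have U2 : nm (h ⋆ h ⋆ (a ⋆ a)) <= 4 * nm x ^+ 2.
  rewrite e1; apply: le_trans (nm_mul _ _) _.
  have := ler_pM (nm_ge0 _) (nm_ge0 _) U1 U1.
  by move/le_trans; apply; rewrite expr2; nra.
have nx : nm x ^+ 2 = nm x by rewrite -nm_cs hxs hxx.
apply: nm_eq0.
have := nm_ge0 x; rewrite nx in U2; lra.
Qed.

Local Notation proj := (is_projection mul star).
Local Notation lle := (lowner_le mul star).

Lemma leP p q : proj p -> proj q -> lle p q <-> p ⋆ q = p.
Proof.
move=> [hpp hps] [hqq hqs]; split.
- move=> [z hz].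
  pose x := p - p ⋆ q.
  have hxx : x ⋆ x = x.
    have -> : x ⋆ x = p ⋆ p - (p ⋆ p) ⋆ q - (p ⋆ p) ⋆ q + (p ⋆ p) ⋆ (q ⋆ q)
      by rewrite /x; lift; ring.
    by rewrite hpp hqq subrK.
  have hxs : star x = x by rewrite /x starB starM hps hqs mulC.
  have e1 : x ⋆ (q - p) = - x.
    have -> : x ⋆ (q - p) = p ⋆ q - p ⋆ p - p ⋆ (q ⋆ q) + (p ⋆ p) ⋆ q
      by rewrite /x; lift; ring.
    by rewrite hpp hqq /x; lift; ring.
  have e2 : star (z ⋆ x) ⋆ (z ⋆ x) = - x.
    rewrite starM hxs.
    have -> : x ⋆ star z ⋆ (z ⋆ x) = (x ⋆ x) ⋆ (star z ⋆ z) by lift; ring.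
    by rewrite hxx -hz e1.
  have := @core x (z ⋆ x) hxx hxs e2.
  by rewrite /x => /eqP; rewrite subr_eq0 => /eqP <-.
- move=> hpq; exists (q - p).
  rewrite starB hps hqs.
  have -> : (q - p) ⋆ (q - p) = q ⋆ q - p ⋆ q - p ⋆ q + p ⋆ p by lift; ring.
  by rewrite hpp hqq hpq subrK.
Qed.

Lemma co_p a p : p ⋆ p = p -> (a - a ⋆ p) ⋆ p = 0.
Proof. by move=> hpp; rewrite mulBl -mulA hpp subrr. Qed.

Lemma proj_co a p : proj a -> proj p -> proj (a - a ⋆ p).
Proof.
move=> [haa has] [hpp hps]; split.
- have -> : (a - a ⋆ p) ⋆ (a - a ⋆ p) =
     a ⋆ a - (a ⋆ a) ⋆ p - (a ⋆ a) ⋆ p + (a ⋆ a) ⋆ (p ⋆ p) by lift; ring.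
  by rewrite haa hpp subrK.
- by rewrite starB starM has hps mulC.
Qed.

Lemma proj_add a c : proj a -> proj c -> a ⋆ c = 0 -> proj (a + c).
Proof.
move=> [haa has] [hcc hcs] hac; split.
- have -> : (a + c) ⋆ (a + c) = a ⋆ a + c ⋆ c + a ⋆ c + a ⋆ c by lift; ring.
  by rewrite haa hcc hac !addr0.
- by rewrite starD has hcs.
Qed.

Lemma ltr p q r : p ⋆ q = p -> q ⋆ r = q -> p ⋆ r = p.
Proof. by move=> h1 h2; rewrite -h1 -mulA h2. Qed.


Lemma le_mul p q : proj p -> proj q -> lle p q -> p ⋆ q = p.
Proof. by move=> a b; case: (@leP p q a b). Qed.
Lemma mul_le p q : proj p -> proj q -> p ⋆ q = p -> lle p q.
Proof. by move=> a b; case: (@leP p q a b). Qed.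

Lemma main_lemma (I : interval R) (p q : R -> A)
    (Hp : increasing_proj_net mul star I p)
    (Hq : increasing_proj_net mul star I q)
    (pq : R -> A)
    (Hpq : forall l, l \in I -> is_proj_join mul star (p l) (q l) (pq l))
    (mp mq : A)
    (Hmp : is_proj_meet mul star [set l | l \in I] p mp)
    (Hmq : is_proj_meet mul star [set l | l \in I] q mq)
    (j : A) (Hj : is_proj_join mul star mp mq j) :
  is_proj_meet mul star [set l | l \in I] pq j.
Proof.
case: Hp => Pp Ip; case: Hq => Pq Iq.
case: Hmp => Pmp Lmp Gmp; case: Hmq => Pmq Lmq Gmq.
case: Hj => Pj Lj1 Lj2 Gj.
have Ppq l : l \in I -> proj (pq l) by move=> hl; case: (Hpq l hl).
have hmpj : mp ⋆ j = mp by apply: le_mul.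
have hmqj : mq ⋆ j = mq by apply: le_mul.
split => //.
- move=> l hl; apply: Gj; first exact: Ppq.
  + case: (Hpq l hl) => Ppql L1 _ _; apply: mul_le => //.
    apply: (@ltr _ (p l)); first by apply: le_mul => //; [exact: Pp | exact: Lmp].
    by apply: le_mul => //; exact: Pp.
  + case: (Hpq l hl) => Ppql _ L2 _; apply: mul_le => //.
    apply: (@ltr _ (q l)); first by apply: le_mul => //; [exact: Pq | exact: Lmq].
    by apply: le_mul => //; exact: Pq.
move=> r Pr Hr; apply: mul_le => //.
have Epq l : l \in I -> pq l = p l + (q l - q l ⋆ p l).
  move=> hl; have Ppl := Pp l hl; have Pql := Pq l hl.
  case: (Pp l hl) => hpp hps; case: (Pq l hl) => hqq hqs.
  case: (Hpq l hl) => [Ppql Lp Lq G].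
  pose u := p l + (q l - q l ⋆ p l).
  have hpc : p l ⋆ (q l - q l ⋆ p l) = 0 by rewrite mulC co_p.
  have Pu : proj u by apply: proj_add => //; exact: proj_co.
  have hpu : p l ⋆ u = p l by rewrite /u mulDr hpc addr0 hpp.
  have hqu : q l ⋆ u = q l.
    have -> : q l ⋆ u = q l ⋆ p l + q l ⋆ q l - (q l ⋆ q l) ⋆ p l by rewrite /u; lift; ring.
    by rewrite hqq [q l ⋆ p l + _]addrC addrK.
  have h1 : pq l ⋆ u = pq l.
    by apply: le_mul => //; apply: G => //; apply: mul_le.
  have hp' : p l ⋆ pq l = p l by apply: le_mul.
  have hq' : q l ⋆ pq l = q l by apply: le_mul.
  have h2 : u ⋆ pq l = u.
    by rewrite /u mulDl mulBl -mulA hp' hq'.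
  by rewrite -/u -h2 mulC h1.
have Hr' l : l \in I -> r ⋆ (p l + (q l - q l ⋆ p l)) = r.
  move=> hl; rewrite -Epq //; apply: le_mul => //; [exact: Ppq | exact: Hr].
pose e := r - r ⋆ mq.
have Pe : proj e by exact: proj_co.
have hemq : e ⋆ mq = 0 by apply: co_p; case: Pmq.
pose f l := e - e ⋆ p l.
have Pf l : l \in I -> proj (f l) by move=> hl; apply: proj_co => //; exact: Pp.
have fq l : l \in I -> f l ⋆ q l = f l.
  move=> hl; apply/eqP; rewrite eq_sym -subr_eq0; apply/eqP.
  have -> : f l - f l ⋆ q l =
    (r - r ⋆ (p l + (q l - q l ⋆ p l))) - (r - r ⋆ (p l + (q l - q l ⋆ p l))) ⋆ mq
    by rewrite /f /e; lift; ring.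
  by rewrite Hr' // subrr mul0l subrr.
have fmq l : l \in I -> f l ⋆ mq = f l.
  move=> hl; apply: le_mul => //; first exact: Pf.
  apply: Gmq; first exact: Pf.
  move=> m hm; apply: mul_le; [exact: Pf | exact: Pq |].
  case/orP: (le_total l m) => lm.
  - have hqlm : q l ⋆ q m = q l by apply: le_mul; [exact: Pq | exact: Pq | exact: Iq].
    by rewrite -{1}(fq l hl) -mulA hqlm fq.
  - have hpml : p m ⋆ p l = p m by apply: le_mul; [exact: Pp | exact: Pp | exact: Ip].
    have hff : f l ⋆ f m = f l.
      case: Pe => hee _.
      have -> : f l ⋆ f m = e ⋆ e - (e ⋆ e) ⋆ p m - (e ⋆ e) ⋆ p l + (e ⋆ e) ⋆ (p m ⋆ p l)
        by rewrite /f; lift; ring.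
      by rewrite hee hpml /f; lift; ring.
    by rewrite -hff -mulA fq.
have f0 l : l \in I -> f l = 0.
  move=> hl; rewrite -(fmq l hl).
  have -> : f l ⋆ mq = e ⋆ mq - (e ⋆ mq) ⋆ p l by rewrite /f; lift; ring.
  by rewrite hemq mul0l subrr.
have hemp : e ⋆ mp = e.
  apply: le_mul => //; apply: Gmp => // l hl; apply: mul_le => //; first exact: Pp.
  by have := f0 l hl; rewrite /f => /eqP; rewrite subr_eq0 => /eqP <-.
have -> : r ⋆ j = r ⋆ (mq ⋆ j) + (e ⋆ mp) ⋆ j by rewrite hemp /e; lift; ring.
by rewrite -mulA hmpj hemp hmqj /e addrC subrK.
Qed.

End Alg.
End Norms.

Theorem lemma2p1 (R : realType) (A : completeNormedModType R[i])
    (mul : A -> A -> A) (star : A -> A)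
    (HAW : is_AWstar_algebra mul star) (Hab : is_abelian mul)
    (I : interval R) (p q : R -> A)
    (Hp : increasing_proj_net mul star I p)
    (Hq : increasing_proj_net mul star I q)
    (pq : R -> A)
    (Hpq : forall l, l \in I -> is_proj_join mul star (p l) (q l) (pq l))
    (mp mq : A)
    (Hmp : is_proj_meet mul star [set l | l \in I] p mp)
    (Hmq : is_proj_meet mul star [set l | l \in I] q mq)
    (j : A) (Hj : is_proj_join mul star mp mq j) :
  is_proj_meet mul star [set l | l \in I] pq j.
Proof.
exact: (@main_lemma R A mul star (proj1 HAW) Hab I p q Hp Hq pq Hpq mp mq Hmp Hmq j Hj).
Qed.
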